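(* Let $0<n<m$ be real numbers, $N\ge 2$ an integer, and let $V(r)=-\frac{c_n}{r^n}+\frac{c_m}{r^m}$ for $r>0$, where $c_n,c_m>0$ are chosen so that $V$ attains its minimum at $a=\frac1N$. Let $\kappa=V''(a)$ and $f>0$, and consider \[ U(z_1,\dots,z_{N-1})=\sum_{k=1}^{N-1}V(z_k-z_{k-1})-f\,z_{N-1},\qquad z_0=0, \] on the set $0=z_0<z_1<\dots<z_{N-1}$. Call a fixed point a configuration in this set at which $\partial U/\partial z_k=0$ for all $k=1,\dots,N-1$ (i.e. an equilibrium, with zero momenta, of the Hamiltonian $H=\sum_{k=1}^{N-1}\frac{p_k^2}{2m_0}+U$ for any particle mass $m_0>0$). Then a fixed point exists if and only if \[ \sigma:=\frac{f}{\kappa}\le \frac{C}{N},\qquad C=C(n,m)=\frac{1}{m-n}\left(\Bigl(\frac{m+1}{n+1}\Bigr)^{-\frac{n+1}{m-n}}-\Bigl(\frac{m+1}{n+1}\Bigr)^{-\frac{m+1}{m-n}}\right). \] *)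

(* Defs.v *)
From Stdlib Require Import Reals Lra Lia.
From Coquelicot Require Import Coquelicot.
Open Scope R_scope.

Definition LJV (n m cn cm : R) (r : R) : R :=
  - cn / Rpower r n + cm / Rpower r m.

Definition Cnm (n m : R) : R :=
  / (m - n) *
  ( Rpower ((m + 1) / (n + 1)) (- ((n + 1) / (m - n)))
  - Rpower ((m + 1) / (n + 1)) (- ((m + 1) / (m - n))) ).

Fixpoint chain_sum (V : R -> R) (z : nat -> R) (K : nat) : R :=
  match K with
  | O => 0
  | S j => chain_sum V z j + V (z (S j) - z j)
  end.

Definition chainU (V : R -> R) (f : R) (N : nat) (z : nat -> R) : R :=
  chain_sum V z (N - 1) - f * z (N - 1)%nat.

Definition upd (z : nat -> R) (k : nat) (t : R) : nat -> R :=
  fun i => if Nat.eqb i k then t else z i.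

Definition admissible (N : nat) (z : nat -> R) : Prop :=
  z O = 0 /\ forall k, (k < N - 1)%nat -> z k < z (S k).

Definition is_fixed_point (V : R -> R) (f : R) (N : nat) (z : nat -> R) : Prop :=
  admissible N z /\
  forall k, (1 <= k <= N - 1)%nat ->
    is_derive (fun t => chainU V f N (upd z k t)) (z k) 0.

(* Main.v *)
Require Import Defs.
From Stdlib Require Import Reals Lra Lia.
From Coquelicot Require Import Coquelicot.
Open Scope R_scope.

Definition E (e r : R) : R := exp (e * ln r).

Lemma E_mul e1 e2 r : E e1 r * E e2 r = E (e1 + e2) r.
Proof. unfold E. rewrite <- exp_plus. f_equal. ring. Qed.

Lemma E_pos e r : 0 < E e r.
Proof. apply exp_pos. Qed.

Lemma dE e r : 0 < r -> is_derive (E e) r (e * E (e-1) r).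
Proof.
  intros Hr. unfold E. auto_derive. lra.
  replace ((e-1) * ln r) with (e * ln r + - ln r) by ring.
  rewrite exp_plus, exp_Ropp, exp_ln by lra. field. lra.
Qed.

Section S.
Variables n m cn cm : R.
Definition gV r := n*cn*E (-n-1) r - m*cm*E (-m-1) r.
Definition hV r := - (n*(n+1)*cn) * E (-n-1-1) r + m*(m+1)*cm*E (-m-1-1) r.

Lemma LJV_eq r : LJV n m cn cm r = -cn * E (-n) r + cm * E (-m) r.
Proof. unfold LJV, Rpower, E, Rdiv. rewrite <- !exp_Ropp.
  replace (-(n*ln r)) with (-n*ln r) by ring.
  replace (-(m*ln r)) with (-m*ln r) by ring. ring. Qed.

Lemma dV r : 0 < r -> is_derive (LJV n m cn cm) r (gV r).
Proof. intros Hr.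
  apply is_derive_ext with (f := fun r => -cn * E (-n) r + cm * E (-m) r).
  { intros; symmetry; apply LJV_eq. }
  replace (gV r) with (plus (-cn * (-n * E(-n-1) r)) (cm * (-m * E(-m-1) r))).
  2:{ unfold gV, plus; simpl. ring. }
  apply (is_derive_plus (fun r => -cn * E (-n) r) (fun r => cm * E (-m) r));
  apply is_derive_scal; apply dE; auto.
Qed.

Lemma dg r : 0 < r -> is_derive gV r (hV r).
Proof. intros Hr.
  replace (hV r) with (minus (n*cn * ((-n-1) * E(-n-1-1) r)) (m*cm * ((-m-1) * E(-m-1-1) r))).
  2:{ unfold hV, minus, plus, opp; simpl. ring. }
  apply (is_derive_minus (fun r => n*cn* E (-n-1) r) (fun r => m*cm * E (-m-1) r));
  apply is_derive_scal; apply dE; auto.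
Qed.

Hypothesis Hn : 0 < n.
Hypothesis Hnm : n < m.
Hypothesis Hcn : 0 < cn.
Hypothesis Hcm : 0 < cm.
Variable a : R.
Hypothesis Ha : 0 < a.
Hypothesis Hmin : forall r, 0 < r -> LJV n m cn cm a <= LJV n m cn cm r.

Lemma ga0 : gV a = 0.
Proof.
  assert (HL : derivable_pt_lim (LJV n m cn cm) a (gV a))
    by (apply is_derive_Reals; apply dV; auto).
  pose (pr := exist _ (gV a) HL : derivable_pt (LJV n m cn cm) a).
  pose proof (deriv_minimum (LJV n m cn cm) (a/2) (2*a) a pr ltac:(lra) ltac:(lra)
     (fun x H1 H2 => Hmin x ltac:(lra))) as H.
  rewrite (derive_pt_eq_0 _ a (gV a) pr HL) in H. exact H.
Qed.

Definition A := E (m-n) a.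
Definition q := (m+1)/(n+1).
Definition rs := exp (ln a + ln q / (m-n)).

Lemma q_gt1 : 1 < q.
Proof. unfold q. apply (Rmult_lt_reg_r (n+1)); [lra|].
  unfold Rdiv; rewrite Rmult_assoc, Rinv_l by lra. lra. Qed.

Lemma cm_eq : m * cm = n * cn * A.
Proof.
  pose proof ga0 as H. unfold gV in H.
  assert (H2 : n*cn*E (-n-1) a * E (m+1) a = m*cm*E (-m-1) a * E (m+1) a) by
    (assert (H' : n*cn*E (-n-1) a = m*cm*E (-m-1) a) by lra; rewrite H'; ring).
  rewrite !Rmult_assoc, !E_mul in H2.
  replace (-m-1 + (m+1)) with 0 in H2 by ring.
  replace (-n-1 + (m+1)) with (m-n) in H2 by ring.
  unfold E at 2 in H2. rewrite Rmult_0_l, exp_0, Rmult_1_r in H2.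
  unfold A. rewrite <- H2. ring.
Qed.

Lemma rs_pos : 0 < rs.
Proof. apply exp_pos. Qed.

Lemma ln_rs : ln rs = ln a + ln q / (m-n).
Proof. unfold rs. apply ln_exp. Qed.

Lemma E_rs : E (m-n) rs = A * q.
Proof. unfold E, A. rewrite ln_rs. rewrite <- (exp_ln q) at 2 by (pose proof q_gt1; lra).
  unfold E. rewrite <- exp_plus. f_equal. field. lra. Qed.

Lemma h_form c : hV c = E (-m-1-1) c * (n*cn*(n+1)) * (E (m-n) rs - E (m-n) c).
Proof.
  unfold hV. rewrite E_rs.
  replace (E (-n-1-1) c) with (E (-m-1-1) c * E (m-n) c) by (rewrite E_mul; f_equal; ring).
  replace (m*(m+1)*cm) with ((m+1)*(m*cm)) by ring. rewrite cm_eq.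
  unfold q. field. lra.
Qed.

Lemma E_incr e x y : 0 < e -> 0 < x -> x < y -> E e x < E e y.
Proof. intros. unfold E. apply exp_increasing. apply Rmult_lt_compat_l; auto.
  apply ln_increasing; auto. Qed.

Lemma h_pos c : 0 < c -> c < rs -> 0 < hV c.
Proof. intros. rewrite h_form.
  assert (E (m-n) c < E (m-n) rs) by (apply E_incr; lra).
  assert (0 < E (-m-1-1) c) by apply E_pos.
  assert (0 < n*cn*(n+1)) by (apply Rmult_lt_0_compat; [apply Rmult_lt_0_compat|]; lra).
  apply Rmult_lt_0_compat; [apply Rmult_lt_0_compat|]; lra. Qed.

Lemma h_neg c : rs < c -> hV c < 0.
Proof. intros. pose proof rs_pos. rewrite h_form.
  assert (E (m-n) rs < E (m-n) c) by (apply E_incr; lra).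
  assert (0 < E (-m-1-1) c) by apply E_pos.
  assert (0 < n*cn*(n+1)) by (apply Rmult_lt_0_compat; [apply Rmult_lt_0_compat|]; lra).
  assert (0 < E (-m-1-1) c * (n*cn*(n+1))) by (apply Rmult_lt_0_compat; lra).
  assert (0 < E (-m-1-1) c * (n*cn*(n+1)) * (E (m-n) c - E (m-n) rs)) by (apply Rmult_lt_0_compat; lra).
  lra. Qed.

Lemma g_max r : 0 < r -> gV r <= gV rs.
Proof.
  intros Hr. pose proof rs_pos.
  destruct (Rtotal_order r rs) as [Hl|[Hl|Hl]].
  - destruct (MVT_cor2 gV hV r rs Hl) as [c0 [Hc1 Hc2]].
    { intros c Hc. apply is_derive_Reals, dg. lra. }
    assert (0 < hV c0) by (apply h_pos; lra).
    assert (0 < hV c0 * (rs - r)) by (apply Rmult_lt_0_compat; lra). lra.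
  - subst; lra.
  - destruct (MVT_cor2 gV hV rs r Hl) as [c0 [Hc1 Hc2]].
    { intros c Hc. apply is_derive_Reals, dg. lra. }
    assert (hV c0 < 0) by (apply h_neg; lra).
    assert (0 < - hV c0 * (r - rs)) by (apply Rmult_lt_0_compat; lra). lra.
Qed.

Lemma kappa : Derive (Derive (LJV n m cn cm)) a = hV a.
Proof.
  rewrite (Derive_ext_loc (Derive (LJV n m cn cm)) gV a).
  - apply is_derive_unique, dg; auto.
  - apply (filter_imp (fun t => 0 < t)).
    + intros t Ht. apply is_derive_unique, dV; auto.
    + apply (open_gt 0 a Ha).
Qed.

Lemma a_lt_rs : a < rs.
Proof. unfold rs. rewrite <- (exp_ln a) at 1 by auto. apply exp_increasing.
  assert (0 < ln q) by (rewrite <- ln_1; apply ln_increasing; pose proof q_gt1; lra).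
  assert (0 < ln q / (m-n)) by (apply Rdiv_lt_0_compat; lra). lra. Qed.

Lemma h_a_pos : 0 < hV a.
Proof. apply h_pos; auto; apply a_lt_rs. Qed.

Lemma g_rs_val : gV rs = hV a * (Cnm n m * a).
Proof.
  rewrite h_form. unfold gV. rewrite E_rs.
  replace (m*cm) with (n*cn*A) by (symmetry; apply cm_eq).
  unfold Cnm, Rpower, A, E. rewrite ln_rs.
  fold q.
  assert (e1 : exp ((- n - 1) * (ln a + ln q / (m - n))) =
     exp ((- m - 1 - 1) * ln a) * exp ((m - n) * ln a) * exp (ln a) * exp (- ((n + 1) / (m - n)) * ln q))
    by (rewrite <- !exp_plus; f_equal; field; lra).
  assert (e2 : exp ((- m - 1) * (ln a + ln q / (m - n))) =
     exp ((- m - 1 - 1) * ln a) * exp (ln a) * exp (- ((m + 1) / (m - n)) * ln q))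
    by (rewrite <- !exp_plus; f_equal; field; lra).
  rewrite e1, e2. rewrite exp_ln by auto. unfold q. field. lra.
Qed.

Lemma g_reach f : 0 < f -> f <= gV rs -> exists r, 0 < r /\ gV r = f.
Proof. intros Hf Hle. pose proof a_lt_rs. destruct (Rle_lt_or_eq_dec _ _ Hle) as [Hlt|Heq].
 - destruct (Ranalysis5.IVT_interv (gV - fct_cte f)%F a rs) as [r [Hr1 Hr2]].
   + intros x Hx. apply continuity_pt_minus.
     * apply derivable_continuous_pt. exists (hV x). apply is_derive_Reals, dg. lra.
     * apply continuity_pt_const. intros ? ?; reflexivity.
   + auto.
   + unfold minus_fct, fct_cte. rewrite ga0. lra.
   + unfold minus_fct, fct_cte. lra.
   + exists r. split. lra. unfold minus_fct, fct_cte in Hr2. lra.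
 - exists rs. split; [apply rs_pos| auto].
Qed.

Lemma core f : 0 < f -> ((exists r, 0 < r /\ gV r = f) <->
   f / Derive (Derive (LJV n m cn cm)) a <= Cnm n m * a).
Proof.
  intros Hf. rewrite kappa. pose proof h_a_pos. rewrite Rle_div_l by lra.
  replace (Cnm n m * a * hV a) with (gV rs) by (rewrite g_rs_val; ring).
  split.
  - intros [r [Hr Hg]]. rewrite <- Hg. apply g_max; auto.
  - intros; apply g_reach; auto.
Qed.
End S.
Section C.
Variables (V g : R -> R).
Hypothesis HV : forall r, 0 < r -> is_derive V r (g r).

Definition Dch (z : nat -> R) k K :=
  (if Nat.leb k K then g (z k - z (k-1)%nat) else 0)
  - (if Nat.leb (S k) K then g (z (S k) - z k) else 0).

Lemma term_d z k K : (forall j, (j < S K)%nat -> z j < z (S j)) ->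
  is_derive (fun t => V (upd z k t (S K) - upd z k t K)) (z k)
   (if Nat.eqb (S K) k then g (z k - z K) else if Nat.eqb K k then - g (z (S K) - z k) else 0).
Proof.
  intros Hz. unfold upd.
  destruct (Nat.eqb (S K) k) eqn:E1; destruct (Nat.eqb K k) eqn:E2.
  - apply Nat.eqb_eq in E1; apply Nat.eqb_eq in E2; lia.
  - apply Nat.eqb_eq in E1. subst k.
    replace (g (z (S K) - z K)) with (scal 1 (g (z (S K) - z K))).
    2:{ unfold scal; simpl; unfold mult; simpl; ring. }
    apply (is_derive_comp V (fun t => t - z K)).
    + apply HV. assert (z K < z (S K)) by (apply Hz; lia). lra.
    + auto_derive; auto.
  - apply Nat.eqb_eq in E2. subst k.
    replace (- g (z (S K) - z K)) with (scal (-1) (g (z (S K) - z K))).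
    2:{ unfold scal; simpl; unfold mult; simpl; ring. }
    apply (is_derive_comp V (fun t => z (S K) - t)).
    + apply HV. assert (z K < z (S K)) by (apply Hz; lia). lra.
    + auto_derive; auto.
  - apply (is_derive_const (V (z (S K) - z K))).
Qed.

Lemma chain_d z k K : (1 <= k)%nat -> (forall j, (j < K)%nat -> z j < z (S j)) ->
  is_derive (fun t => chain_sum V (upd z k t) K) (z k) (Dch z k K).
Proof.
  intros Hk. induction K as [|K IH]; intros Hz.
  - unfold Dch. destruct k as [|k]; [lia|]. simpl.
    rewrite Rminus_0_r.
    apply (is_derive_const 0).
  - simpl chain_sum.
    assert (H1 := IH (fun j Hj => Hz j ltac:(lia))).
    assert (H2 := term_d z k K Hz).
    replace (Dch z k (S K)) with (plus (Dch z k K)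
      (if Nat.eqb (S K) k then g (z k - z K) else if Nat.eqb K k then - g (z (S K) - z k) else 0)).
    + apply (is_derive_plus _ _ _ _ _ H1 H2).
    + unfold Dch. change (plus ?a ?b) with (a + b).
      match goal with |- ?a = ?b => change (@eq R a b) end.
      destruct (Nat.eqb_spec (S K) k); destruct (Nat.eqb_spec K k);
      destruct (Nat.leb_spec k K); destruct (Nat.leb_spec k (S K));
      destruct (Nat.leb_spec (S k) K); destruct (Nat.leb_spec (S k) (S K));
      try (exfalso; lia).
      all: try ring.
      all: try (subst k; try (replace (S K - 1)%nat with K by lia); ring).
Qed.

Lemma chainU_d f N z k : (1 <= k)%nat -> (forall j, (j < N - 1)%nat -> z j < z (S j)) ->
  is_derive (fun t => chainU V f N (upd z k t)) (z k)
    (Dch z k (N-1) - f * (if Nat.eqb (N-1) k then 1 else 0)).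
Proof.
  intros Hk Hz. unfold chainU.
  apply (is_derive_minus (fun t => chain_sum V (upd z k t) (N - 1))
          (fun t => f * upd z k t (N-1)%nat)).
  - apply chain_d; auto.
  - apply is_derive_scal. unfold upd.
    destruct (Nat.eqb (N-1) k) eqn:E.
    + apply (is_derive_id (K := R_AbsRing)).
    + apply (is_derive_const (z (N-1)%nat)).
Qed.
End C.

Theorem lemma1 (n m cn cm f : R) (N : nat) :
  0 < n -> n < m -> (2 <= N)%nat ->
  0 < cn -> 0 < cm ->
  (forall r, 0 < r -> LJV n m cn cm (/ INR N) <= LJV n m cn cm r) ->
  0 < f ->
  (exists z : nat -> R, is_fixed_point (LJV n m cn cm) f N z) <->
  f / Derive (Derive (LJV n m cn cm)) (/ INR N) <= Cnm n m / INR N.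
Proof.
  intros Hn Hnm HN Hcn Hcm Hmin Hf.
  assert (HNp : 0 < INR N) by (apply lt_0_INR; lia).
  assert (Ha : 0 < / INR N) by (apply Rinv_0_lt_compat; auto).
  change (Cnm n m / INR N) with (Cnm n m * / INR N).
  rewrite <- (core n m cn cm Hn Hnm Hcn (/ INR N) Ha Hmin f Hf).
  assert (HV : forall r, 0 < r -> is_derive (LJV n m cn cm) r (gV n m cn cm r))
    by (intros; apply dV; auto).
  split.
  - intros [z [[Hz0 Hadm] Hder]].
    assert (Hlt : z (N-1-1)%nat < z (N-1)%nat).
    { pose proof (Hadm (N-1-1)%nat ltac:(lia)) as H.
      replace (S (N-1-1)) with (N-1)%nat in H by lia. exact H. }
    exists (z (N-1)%nat - z (N-1-1)%nat). split; [lra|].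
    pose proof (chainU_d _ _ HV f N z (N-1)%nat ltac:(lia) Hadm) as H1.
    pose proof (Hder (N-1)%nat ltac:(lia)) as H2.
    apply is_derive_unique in H1. apply is_derive_unique in H2.
    rewrite H1 in H2. unfold Dch in H2.
    rewrite Nat.leb_refl, Nat.eqb_refl in H2.
    replace (Nat.leb (S (N-1)) (N-1)) with false in H2
      by (symmetry; apply Nat.leb_gt; lia).
    lra.
  - intros [r [Hr Hg]].
    pose (z := fun i : nat => INR i * r).
    assert (Hs : forall j, z (S j) - z j = r)
      by (intros j; unfold z; rewrite S_INR; ring).
    assert (Hzl : forall j, (j < N - 1)%nat -> z j < z (S j))
      by (intros j _; pose proof (Hs j); lra).
    exists z. split.
    + split; [unfold z; simpl; ring | exact Hzl].
    + intros k Hk.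
      pose proof (chainU_d _ _ HV f N z k ltac:(lia) Hzl) as H1.
      assert (Hv : Dch (gV n m cn cm) z k (N - 1) - f * (if Nat.eqb (N-1) k then 1 else 0) = 0).
      { unfold Dch.
        replace (Nat.leb k (N-1)) with true by (symmetry; apply Nat.leb_le; lia).
        destruct k as [|k]; [lia|].
        replace (S k - 1)%nat with k by lia.
        rewrite Hs, Hs, Hg.
        destruct (Nat.eqb_spec (N-1) (S k)).
        - replace (Nat.leb (S (S k)) (N-1)) with false
            by (symmetry; apply Nat.leb_gt; lia). ring.
        - replace (Nat.leb (S (S k)) (N-1)) with true
            by (symmetry; apply Nat.leb_le; lia). ring. }
      rewrite Hv in H1. exact H1.
Qed.
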